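(* Let $G$ be a torsion abelian group, $S=\bigoplus_{i\in G}S_i$ a $G$-graded ring and $R=\bigoplus_{i\in G}R_i$ a graded subring of $S$ (so $R_i=R\cap S_i$). Suppose (i) $S=R[v]$ is a polynomial ring in one variable over $R$ for some homogeneous element $v$ of $S$, and (ii) $H=\{i\in G: R_i\neq0\}$ is a subgroup of $G$. Then at least one of the following holds: (a) $S_0$ is a polynomial ring in one variable over $R_0$; (b) there exists $e\in H\setminus\{0\}$ such that, if $k>0$ denotes the order of $e$ in $H$, then for every $r\in R_e\setminus\{0\}$ the localization $(S_0)_{r^k}$ is a polynomial ring in one variable.
   Context: A ring $C$ is a polynomial ring in one variable if there is a subring $A\subseteq C$ such that $C$ is a polynomial ring in one variable over $A$ (the zero ring counts). *)

(* Defs.v *)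
From HB Require Import structures.
From mathcomp Require Import all_boot all_order all_algebra.
Set Implicit Arguments. Unset Strict Implicit. Unset Printing Implicit Defensive.
Import GRing.Theory.
Local Open Scope ring_scope.

(* Rings are commutative with 1; the zero ring is allowed (comPzRingType). *)

Definition subring_of (C : pzRingType) (A : pred C) : Prop :=
  1 \in A /\ (forall a b, a \in A -> b \in A -> a - b \in A) /\
  (forall a b, a \in A -> b \in A -> a * b \in A).

Definition poly_expr (C : comPzRingType) (s : seq C) (x : C) : C :=
  \sum_(i < size s) s`_i * x ^+ i.

(* The subring D of C equals A[x] and x is algebraically independent over A,
   i.e. D is a polynomial ring in one variable x over A (A should be a subring
   contained in D). *)
Definition is_poly_ring_in_over (C : comPzRingType) (D A : pred C) (x : C) : Prop :=
  x \in D /\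
  (forall c, c \in D -> exists s : seq C, all (fun a => a \in A) s /\ c = poly_expr s x) /\
  (forall s : seq C, all (fun a => a \in A) s -> poly_expr s x = 0 ->
     all (fun a => a == 0) s).

Definition is_poly_ring1 (L : comPzRingType) : Prop :=
  exists (A : pred L) (x : L), subring_of A /\ is_poly_ring_in_over predT A x.

Definition torsion (G : zmodType) : Prop :=
  forall g : G, exists n, (0 < n)%N /\ g *+ n = 0.

Definition is_grading (G : zmodType) (S : comPzRingType) (Sg : G -> pred S) : Prop :=
  (forall i, 0 \in Sg i) /\
  (forall i a b, a \in Sg i -> b \in Sg i -> a - b \in Sg i) /\
  (forall i j a b, a \in Sg i -> b \in Sg j -> a * b \in Sg (i + j)) /\
  (forall s : S, exists (l : seq G) (f : G -> S),
      uniq l /\ (forall i, f i \in Sg i) /\ s = \sum_(i <- l) f i) /\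
  (forall (l : seq G) (f : G -> S), uniq l -> (forall i, f i \in Sg i) ->
      \sum_(i <- l) f i = 0 -> forall i, i \in l -> f i = 0).

(* R is a graded subring of S: a subring containing the homogeneous
   components of each of its elements (so R = (+)_i R_i, R_i = R cap S_i). *)
Definition graded_subring (G : zmodType) (S : comPzRingType) (Sg : G -> pred S)
  (R : pred S) : Prop :=
  subring_of R /\
  (forall (r : S) (l : seq G) (f : G -> S), r \in R -> uniq l ->
     (forall i, f i \in Sg i) -> r = \sum_(i <- l) f i ->
     forall i, i \in l -> f i \in R).

Definition in_support (G : zmodType) (S : comPzRingType) (Sg : G -> pred S)
  (R : pred S) (i : G) : Prop :=
  exists r, r \in R /\ r \in Sg i /\ r != 0.

Definition support_is_subgroup (G : zmodType) (S : comPzRingType) (Sg : G -> pred S)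
  (R : pred S) : Prop :=
  in_support Sg R 0 /\
  (forall i j, in_support Sg R i -> in_support Sg R j -> in_support Sg R (i - j)).

Definition is_order (G : zmodType) (e : G) (k : nat) : Prop :=
  (0 < k)%N /\ e *+ k = 0 /\ (forall m, (0 < m)%N -> (m < k)%N -> e *+ m != 0).

(* phi : A -> L (defined on the subring A of S) exhibits L as the
   localization A_f of A at f in A (standard characterization up to iso). *)
Definition is_localization (S : comPzRingType) (A : pred S) (f : S)
  (L : comPzRingType) (phi : S -> L) : Prop :=
  phi 1 = 1 /\
  (forall a b, a \in A -> b \in A -> phi (a + b) = phi a + phi b) /\
  (forall a b, a \in A -> b \in A -> phi (a * b) = phi a * phi b) /\
  (exists y, y * phi f = 1) /\
  (forall y : L, exists (a : S) (n : nat), a \in A /\ y * phi f ^+ n = phi a) /\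
  (forall a, a \in A -> phi a = 0 -> exists n, f ^+ n * a = 0).

(* Main.v *)
Require Import Defs.
From HB Require Import structures.
From mathcomp Require Import all_boot all_order all_algebra.
From mathcomp Require Import ring zify generic_quotient.
From Stdlib Require Import ClassicalEpsilon.
Set Implicit Arguments. Unset Strict Implicit. Unset Printing Implicit Defensive.
Import GRing.Theory.
Local Open Scope ring_scope.

Definition pb (P : Prop) : bool := if excluded_middle_informative P then true else false.
Lemma pbP (P : Prop) : reflect P (pb P).
Proof. rewrite /pb; case: excluded_middle_informative => h; by constructor. Qed.

Section Loc.
Variables (T : comPzRingType) (f : T).

Definition eqv (x y : T * nat) : Prop :=
  exists p, f ^+ p * (x.1 * f ^+ y.2 - y.1 * f ^+ x.2) = 0.
Definition eqvb x y : bool := pb (eqv x y).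

Lemma eqvb_equiv : equiv_class_of eqvb.
Proof.
split.
- by move=> x; apply/pbP; exists 0%N; rewrite subrr mulr0.
- move=> x y; apply/pbP/pbP => -[p hp]; exists p;
  by rewrite -opprB mulrN hp oppr0.
- move=> y x z /pbP [p hp] /pbP [q hq]; apply/pbP; exists (p + q + y.2)%N.
  have -> : f ^+ (p + q + y.2) * (x.1 * f ^+ z.2 - z.1 * f ^+ x.2)
     = f ^+ (q + z.2) * (f ^+ p * (x.1 * f ^+ y.2 - y.1 * f ^+ x.2))
       + f ^+ (p + x.2) * (f ^+ q * (y.1 * f ^+ z.2 - z.1 * f ^+ y.2)).
    rewrite !exprD; ring.
  by rewrite hp hq !mulr0 addr0.
Qed.

Canonical eqv_equiv := EquivRelPack eqvb_equiv.
Canonical eqv_encModRel := defaultEncModRel eqvb.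

Definition Loc := {eq_quot eqvb}%qT.
HB.instance Definition _ : EqQuotient (T * nat)%type eqvb Loc := EqQuotient.on Loc.
HB.instance Definition _ := Choice.on Loc.

Definition pl (x : T * nat) : Loc := (\pi_Loc x)%qT.

Lemma plE x y : pl x = pl y <-> eqv x y.
Proof. split.
- by move=> h; apply/pbP; apply/(eqquotP Loc).
- by move=> h; apply/(eqquotP Loc); apply/pbP.
Qed.

Lemma reprE (x : Loc) : x = pl (repr x).
Proof. by rewrite /pl reprK. Qed.

Definition addp (x y : T * nat) := (x.1 * f ^+ y.2 + y.1 * f ^+ x.2, (x.2 + y.2)%N).
Definition mulp (x y : T * nat) := (x.1 * y.1, (x.2 + y.2)%N).
Definition oppp (x : T * nat) := (- x.1, x.2).

Lemma addp_eqv x x' y y' : eqv x x' -> eqv y y' -> eqv (addp x y) (addp x' y').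
Proof.
move=> [p hp] [q hq]; exists (p + q)%N; rewrite /addp /=.
have -> : f ^+ (p + q) *
  ((x.1 * f ^+ y.2 + y.1 * f ^+ x.2) * f ^+ (x'.2 + y'.2) -
   (x'.1 * f ^+ y'.2 + y'.1 * f ^+ x'.2) * f ^+ (x.2 + y.2))
  = f ^+ q * f ^+ y.2 * f ^+ y'.2 * (f ^+ p * (x.1 * f ^+ x'.2 - x'.1 * f ^+ x.2))
  + f ^+ p * f ^+ x.2 * f ^+ x'.2 * (f ^+ q * (y.1 * f ^+ y'.2 - y'.1 * f ^+ y.2)).
  rewrite !exprD; ring.
by rewrite hp hq !mulr0 addr0.
Qed.

Lemma mulp_eqv x x' y y' : eqv x x' -> eqv y y' -> eqv (mulp x y) (mulp x' y').
Proof.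
move=> [p hp] [q hq]; exists (p + q)%N; rewrite /mulp /=.
have -> : f ^+ (p + q) * (x.1 * y.1 * f ^+ (x'.2 + y'.2) - x'.1 * y'.1 * f ^+ (x.2 + y.2))
  = f ^+ q * y.1 * f ^+ y'.2 * (f ^+ p * (x.1 * f ^+ x'.2 - x'.1 * f ^+ x.2))
  + f ^+ p * x'.1 * f ^+ x.2 * (f ^+ q * (y.1 * f ^+ y'.2 - y'.1 * f ^+ y.2)).
  rewrite !exprD; ring.
by rewrite hp hq !mulr0 addr0.
Qed.

Lemma oppp_eqv x x' : eqv x x' -> eqv (oppp x) (oppp x').
Proof.
move=> [p hp]; exists p; rewrite /oppp /=.
by rewrite !mulNr -opprD mulrN hp oppr0.
Qed.

Lemma repr_pl x : eqv (repr (pl x)) x.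
Proof. by apply/plE; rewrite -reprE. Qed.

Definition lzero : Loc := pl (0, 0%N).
Definition lone : Loc := pl (1, 0%N).
Definition ladd (x y : Loc) : Loc := pl (addp (repr x) (repr y)).
Definition lmul (x y : Loc) : Loc := pl (mulp (repr x) (repr y)).
Definition lopp (x : Loc) : Loc := pl (oppp (repr x)).

Lemma ladd_pl x y : ladd (pl x) (pl y) = pl (addp x y).
Proof. by apply/plE; apply: addp_eqv; apply: repr_pl. Qed.
Lemma lmul_pl x y : lmul (pl x) (pl y) = pl (mulp x y).
Proof. by apply/plE; apply: mulp_eqv; apply: repr_pl. Qed.
Lemma lopp_pl x : lopp (pl x) = pl (oppp x).
Proof. by apply/plE; apply: oppp_eqv; apply: repr_pl. Qed.

Lemma eqv_eq x y : x.2 = y.2 -> x.1 = y.1 -> eqv x y.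
Proof. by case: x y => [a n] [b m] /= -> ->; exists 0%N; rewrite subrr mulr0. Qed.

Lemma plW (P : Loc -> Prop) : (forall a, P (pl a)) -> forall x, P x.
Proof. by move=> h x; rewrite (reprE x). Qed.
Lemma laddA : associative ladd.
Proof.
move=> x y z; move: x y z; apply: plW => x; apply: plW => y; apply: plW => z.
rewrite !ladd_pl; apply/plE; apply: eqv_eq; rewrite /addp /= ?addnA // !exprD; ring.
Qed.
Lemma laddC : commutative ladd.
Proof.
move=> x y; move: x y; apply: plW => x; apply: plW => y.
rewrite !ladd_pl; apply/plE; apply: eqv_eq; rewrite /addp /=; [exact: addnC | ring].
Qed.
Lemma ladd0 : left_id lzero ladd.
Proof.
apply: plW => x; rewrite /lzero ladd_pl; apply/plE.
apply: eqv_eq; rewrite /addp /= ?add0n //; ring.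
Qed.
Lemma laddN : left_inverse lzero lopp ladd.
Proof.
apply: plW => x; rewrite lopp_pl ladd_pl; apply/plE.
by exists 0%N; rewrite /addp /oppp /=; ring.
Qed.

HB.instance Definition _ := GRing.isZmodule.Build Loc laddA laddC ladd0 laddN.

Lemma lmulA : associative lmul.
Proof.
move=> x y z; move: x y z; apply: plW => x; apply: plW => y; apply: plW => z.
rewrite !lmul_pl; apply/plE; apply: eqv_eq; rewrite /mulp /= ?addnA //; ring.
Qed.
Lemma lmulC : commutative lmul.
Proof.
move=> x y; move: x y; apply: plW => x; apply: plW => y.
rewrite !lmul_pl; apply/plE; apply: eqv_eq; rewrite /mulp /=; [exact: addnC | ring].
Qed.
Lemma lmul1 : left_id lone lmul.
Proof.
apply: plW => x; rewrite /lone lmul_pl; apply/plE.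
apply: eqv_eq; rewrite /mulp /= ?add0n //; ring.
Qed.
Lemma lmulDl : left_distributive lmul ladd.
Proof.
move=> x y z; move: x y z; apply: plW => x; apply: plW => y; apply: plW => z.
rewrite !(ladd_pl, lmul_pl); apply/plE.
exists 0%N; rewrite /addp /mulp /= !exprD; ring.
Qed.

HB.instance Definition _ := GRing.Zmodule_isComPzRing.Build Loc lmulA lmulC lmul1 lmulDl.

Lemma pl_add a b : pl (a, 0%N) + pl (b, 0%N) = pl (a + b, 0%N).
Proof. rewrite [_ + _]ladd_pl; apply/plE; apply: eqv_eq => //=; ring. Qed.
Lemma pl_mul a b : pl (a, 0%N) * pl (b, 0%N) = pl (a * b, 0%N).
Proof. rewrite [_ * _]lmul_pl; apply/plE; apply: eqv_eq => //=. Qed.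
Lemma pl_one : pl (1, 0%N) = 1.
Proof. by []. Qed.
Lemma pl_inv : pl (1, 1%N) * pl (f, 0%N) = 1.
Proof. rewrite [_ * _]lmul_pl; apply/plE; exists 0%N => /=; ring. Qed.
Lemma pl_fracE a n : pl (a, n) * pl (f, 0%N) ^+ n = pl (a, 0%N).
Proof.
elim: n a => [|n IH] a; first by rewrite expr0 mulr1.
rewrite exprS mulrA (_ : pl (a, n.+1) * pl (f, 0%N) = pl (a, n)) ?IH //.
rewrite [_ * _]lmul_pl; apply/plE; exists 0%N => /=; rewrite !addn0 !exprS; ring.
Qed.
Lemma pl_ker a : pl (a, 0%N) = 0 -> exists p, f ^+ p * a = 0.
Proof. move/plE => [p hp]; exists p; move: hp => /=; rewrite !expr0 !mulr1 subr0. by []. Qed.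
End Loc.

Lemma sum_sup (G : eqType) (V : nmodType) (l L : seq G) (F : G -> V) :
  uniq l -> uniq L -> {subset l <= L} -> (forall g, g \notin l -> F g = 0) ->
  \sum_(g <- L) F g = \sum_(g <- l) F g.
Proof.
move=> ul uL sub F0.
rewrite (bigID (fun g => g \in l)) /= [X in _ + X]big1 ?addr0; last first.
  by move=> g /F0.
rewrite -big_filter; apply: perm_big; apply: uniq_perm => //.
  exact: filter_uniq.
by move=> g; rewrite mem_filter; case: (boolP (g \in l)) => // /sub ->.
Qed.

Section Grading.
Variables (G : zmodType) (S : comPzRingType) (Sg : G -> pred S).
Hypothesis hgr : is_grading Sg.

Lemma Sg0 i : 0 \in Sg i. Proof. by case: hgr. Qed.
Lemma SgB i a b : a \in Sg i -> b \in Sg i -> a - b \in Sg i.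
Proof. by case: hgr => _ [h _]; apply: h. Qed.
Lemma SgM i j a b : a \in Sg i -> b \in Sg j -> a * b \in Sg (i + j).
Proof. by case: hgr => _ [_ [h _]]; apply: h. Qed.
Lemma SgD i a b : a \in Sg i -> b \in Sg i -> a + b \in Sg i.
Proof.
move=> ha hb; have := SgB ha (SgB (Sg0 i) hb); by rewrite sub0r opprK.
Qed.
Lemma SgN i a : a \in Sg i -> - a \in Sg i.
Proof. move=> ha; have := SgB (Sg0 i) ha; by rewrite sub0r. Qed.
Lemma Sg_ex (s : S) : exists (l : seq G) (f : G -> S),
      uniq l /\ (forall i, f i \in Sg i) /\ s = \sum_(i <- l) f i.
Proof. by case: hgr => _ [_ [_ [h _]]]; apply: h. Qed.
Lemma Sg_uniq (l : seq G) (f : G -> S) : uniq l -> (forall i, f i \in Sg i) ->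
      \sum_(i <- l) f i = 0 -> forall i, i \in l -> f i = 0.
Proof. by case: hgr => _ [_ [_ [_ h]]]; apply: h. Qed.

Definition dec (t : S) := constructive_indefinite_description _ (Sg_ex t).
Definition lst t := proj1_sig (dec t).
Definition fn t := proj1_sig (constructive_indefinite_description _ (proj2_sig (dec t))).
Lemma fn_spec t : uniq (lst t) /\ (forall i, fn t i \in Sg i) /\ t = \sum_(i <- lst t) fn t i.
Proof. rewrite /fn /lst; case: constructive_indefinite_description => /= f; done. Qed.
Definition comp t g := if g \in lst t then fn t g else 0.

Lemma comp_Sg t g : comp t g \in Sg g.
Proof. rewrite /comp; case: ifP => _; [exact: (proj1 (proj2 (fn_spec t))) | exact: Sg0]. Qed.
Lemma comp_out t g : g \notin lst t -> comp t g = 0.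
Proof. by rewrite /comp => /negPf ->. Qed.
Lemma comp_sum t : t = \sum_(g <- lst t) comp t g.
Proof.
rewrite {1}(proj2 (proj2 (fn_spec t))); apply: eq_big_seq => g hg.
by rewrite /comp hg.
Qed.

Lemma comp_unique t l F : uniq l -> (forall g, F g \in Sg g) ->
  (forall g, g \notin l -> F g = 0) -> t = \sum_(g <- l) F g ->
  forall g, comp t g = F g.
Proof.
move=> ul FS F0 Ht.
set L := undup (l ++ lst t).
have uL : uniq L by exact: undup_uniq.
have h0 : \sum_(g <- L) (F g - comp t g) = 0.
  rewrite sumrB (sum_sup (l := l)) // ?(sum_sup (l := lst t) (F := comp t)) //.
  - by rewrite -Ht -comp_sum subrr.
  - exact: (proj1 (fn_spec t)).
  - by move=> g hg; rewrite mem_undup mem_cat hg orbT.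
  - exact: comp_out.
  - by move=> g hg; rewrite mem_undup mem_cat hg.
have hz := Sg_uniq uL (fun g => SgB (FS g) (comp_Sg t g)) h0.
move=> g; case: (boolP (g \in L)) => hg.
  by apply/eqP; rewrite eq_sym -subr_eq0; apply/eqP; apply: hz.
move: hg; rewrite mem_undup mem_cat negb_or => /andP [h1 h2].
by rewrite F0 // comp_out.
Qed.

Lemma comp_unique' t l F g : uniq l -> (forall g, F g \in Sg g) ->
  (forall g, g \notin l -> F g = 0) -> t = \sum_(g <- l) F g ->
  comp t g = F g.
Proof. move=> h1 h2 h3 h4; exact: (comp_unique h1 h2 h3 h4). Qed.

Lemma comp0 g : comp 0 g = 0.
Proof. by rewrite (@comp_unique 0 [::] (fun _ => 0)) // ?big_nil // => ?; exact: Sg0. Qed.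

Lemma compD t1 t2 g : comp (t1 + t2) g = comp t1 g + comp t2 g.
Proof.
pose L := undup (lst t1 ++ lst t2).
apply: (@comp_unique' (t1 + t2) L (fun g => comp t1 g + comp t2 g) g).
- exact: undup_uniq.
- by move=> h; apply: SgD; apply: comp_Sg.
- move=> h; rewrite mem_undup mem_cat negb_or => /andP [h1 h2].
  by rewrite !comp_out // addr0.
- rewrite big_split /= (sum_sup (l := lst t1) (F := comp t1)) ?(sum_sup (l := lst t2) (F := comp t2)).
  + by rewrite -!comp_sum.
  + exact: (proj1 (fn_spec t2)).
  + exact: undup_uniq.
  + by move=> h hh; rewrite mem_undup mem_cat hh orbT.
  + exact: comp_out.
  + exact: (proj1 (fn_spec t1)).
  + exact: undup_uniq.
  + by move=> h hh; rewrite mem_undup mem_cat hh.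
  + exact: comp_out.
Qed.

Lemma comp_sumn n (F : nat -> S) g :
  comp (\sum_(i < n) F i) g = \sum_(i < n) comp (F i) g.
Proof.
elim: n => [|n IH]; first by rewrite !big_ord0 comp0.
by rewrite !big_ord_recr /= compD IH.
Qed.

Lemma comp_hom t h g : t \in Sg h -> comp t g = if g == h then t else 0.
Proof.
move=> ht; apply: (@comp_unique' t [:: h] (fun k => if k == h then t else 0) g) => //.
- by move=> k; case: eqP => [->|_] //; exact: Sg0.
- by move=> k; rewrite inE => /negPf ->.
- by rewrite big_seq1 eqxx.
Qed.

Lemma comp_mulr t x h g : x \in Sg h -> comp (t * x) g = comp t (g - h) * x.
Proof.
move=> hx.
apply: (@comp_unique' (t * x) (map (fun k => k + h) (lst t)) (fun g => comp t (g - h) * x) g).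
- rewrite map_inj_uniq; first exact: (proj1 (fn_spec t)).
  exact: addIr.
- move=> k; have := SgM (comp_Sg t (k - h)) hx; by rewrite subrK.
- move=> k hk; rewrite comp_out ?mul0r //; apply: contra hk => hk.
  by apply/mapP; exists (k - h); rewrite ?subrK.
- rewrite big_map; under eq_bigr do rewrite addrK.
  by rewrite -mulr_suml -comp_sum.
Qed.

Lemma Sg1 : 1 \in Sg 0.
Proof.
have hom : forall x h, x \in Sg h -> comp 1 0 * x = x.
  move=> x h hx; have := comp_mulr 1 h hx; rewrite mul1r subrr => <-.
  by rewrite (comp_hom h hx) eqxx.
have all1 : forall y, comp 1 0 * y = y.
  move=> y; have -> : comp 1 0 * y = \sum_(g <- lst y) comp 1 0 * comp y g.
    by rewrite -mulr_sumr -comp_sum.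
  rewrite [RHS](comp_sum y).
  by apply: eq_bigr => g _; apply: (hom _ g); apply: comp_Sg.
have := all1 1; rewrite mulr1 => <-; exact: comp_Sg.
Qed.

Lemma SgX x h n : x \in Sg h -> x ^+ n \in Sg (h *+ n).
Proof.
move=> hx; elim: n => [|n IH]; first by rewrite expr0 mulr0n; exact: Sg1.
by rewrite exprS mulrS; apply: SgM.
Qed.

Lemma SgE i j a : i = j -> a \in Sg i -> a \in Sg j.
Proof. by move=> ->. Qed.

End Grading.

Record subT (S : comPzRingType) (P : pred S) := MkSub { subv : S; subP : P subv }.

Section SubR.
Variables (S : comPzRingType) (P : pred S) (hP : subring_closed P).
Definition subTy of subring_closed P := subT P.
HB.instance Definition _ := [isSub of subTy hP for @subv S P].
HB.instance Definition _ := [Choice of subTy hP by <:].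
HB.instance Definition _ := GRing.SubChoice_isSubComPzRing.Build S P (subTy hP) hP.
Lemma sval1 : subv (1 : subTy hP) = 1. Proof. by []. Qed.
Lemma subvX (x : subTy hP) n : subv (x ^+ n) = subv x ^+ n.
Proof. elim: n => [|n IH]; first by []. by rewrite !exprS -IH. Qed.
Lemma subvM (x y : subTy hP) : subv (x * y) = subv x * subv y. Proof. by []. Qed.
Lemma subvD (x y : subTy hP) : subv (x + y) = subv x + subv y. Proof. by []. Qed.
Lemma subv0 : subv (0 : subTy hP) = 0. Proof. by []. Qed.
End SubR.

Lemma spread (V : nmodType) n0 N (F : nat -> V) : (0 < n0)%N ->
  \sum_(0 <= j < n0 * N) (if (n0 %| j)%N then F (j %/ n0)%N else 0) = \sum_(0 <= i < N) F i.
Proof.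
move=> n0p; elim: N => [|N IH]; first by rewrite muln0 !big_geq.
rewrite mulnS addnC (big_cat_nat _ (n := (n0 * N)%N)) //= ?leq_addr // IH big_nat_recr //=.
congr (_ + _); rewrite big_ltn; last by lia.
rewrite dvdn_mulr // mulKn // big1_seq ?addr0 // => j; rewrite mem_index_iota => /andP [h1 h2].
case: ifP => // /dvdnP [q hq]; exfalso; subst j.
case: (leqP q N) => hq; have := leq_mul hq (leqnn n0); move: h1 h2; lia.
Qed.

Lemma compress (V : nmodType) n0 N (F : nat -> V) : (0 < n0)%N ->
  (forall j, ~~ (n0 %| j)%N -> F j = 0) -> (forall j, (N <= j)%N -> F j = 0) ->
  \sum_(0 <= j < N) F j = \sum_(0 <= i < N) F (n0 * i)%N.
Proof.
move=> n0p h1 h2.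
have -> : \sum_(0 <= j < N) F j = \sum_(0 <= j < n0 * N) F j.
  rewrite [RHS](big_cat_nat _ (n := N)) //= ?leq_pmull // [X in _ = _ + X]big1_seq ?addr0 //.
  by move=> j; rewrite /= mem_index_iota => /andP [hj _]; apply: h2.
rewrite -(@spread _ n0 N (fun i => F (n0 * i)%N)) //; apply: eq_bigr => j _.
case: ifP => [/dvdnP [q ->]|/negbT /h1 //]; by rewrite mulnK // mulnC.
Qed.


Section Main.
Variables (G : zmodType) (S : comPzRingType) (Sg : G -> pred S) (R : pred S) (v : S) (d : G).
Hypotheses (htor : torsion G) (hgr : is_grading Sg) (hR : graded_subring Sg R)
  (hv : v \in Sg d) (hpoly : is_poly_ring_in_over predT R v) (hH : support_is_subgroup Sg R).

Lemma R1 : 1 \in R. Proof. by case: hR => [[h _] _]. Qed.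
Lemma RB a b : a \in R -> b \in R -> a - b \in R.
Proof. by case: hR => [[_ [h _]] _]; apply: h. Qed.
Lemma RM a b : a \in R -> b \in R -> a * b \in R.
Proof. by case: hR => [[_ [_ h]] _]; apply: h. Qed.
Lemma R0 : 0 \in R. Proof. by have := RB R1 R1; rewrite subrr. Qed.
Lemma RD a b : a \in R -> b \in R -> a + b \in R.
Proof. move=> ha hb; have := RB ha (RB R0 hb); by rewrite sub0r opprK. Qed.
Lemma RX a n : a \in R -> a ^+ n \in R.
Proof. move=> ha; elim: n => [|n IH]; [exact: R1 | rewrite exprS; exact: RM]. Qed.

Lemma comp_R a g : a \in R -> comp hgr a g \in R.
Proof.
move=> ha; rewrite /comp; case: ifP => hg; last exact: R0.
case: hR => _ h; have [u [fs fe]] := fn_spec hgr a.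
exact: (h a (lst hgr a) (fn hgr a)).
Qed.

Local Notation ins := (in_support Sg R).
Lemma ins0 : ins 0. Proof. by case: hH. Qed.
Lemma insB x y : ins x -> ins y -> ins (x - y). Proof. by case: hH => _ h; apply: h. Qed.
Lemma insN x : ins x -> ins (- x). Proof. by move=> h; have := insB ins0 h; rewrite sub0r. Qed.
Lemma insMn x n : ins x -> ins (x *+ n).
Proof.
move=> hx; elim: n => [|n IH]; first by rewrite mulr0n; exact: ins0.
by rewrite mulrS; have := insB hx (insN IH); rewrite opprK.
Qed.

Lemma exn0 : exists n, (0 < n)%N && pb (ins (d *+ n)).
Proof.
case: (htor d) => n [np hn]; exists n; rewrite np /=; apply/pbP; rewrite hn; exact: ins0.
Qed.
Definition n0 := ex_minn exn0.
Lemma n0_spec : (0 < n0)%N /\ ins (d *+ n0) /\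
  forall m, (0 < m)%N -> ins (d *+ m) -> (n0 <= m)%N.
Proof.
rewrite /n0; case: ex_minnP => m /andP [mp /pbP hm] hmin; split => //; split => // k kp hk.
by apply: hmin; rewrite kp; apply/pbP.
Qed.

Lemma div_n0 j : ins (d *+ j) -> (n0 %| j)%N.
Proof.
move=> hj; case: n0_spec => n0p [hn0 hmin].
have [hr0|hr] := posnP (j %% n0).
  by apply/dvdnP; exists (j %/ n0)%N; rewrite {1}(divn_eq j n0) hr0 addn0.
exfalso.
have e1 : d *+ j = (d *+ n0) *+ (j %/ n0) + d *+ (j %% n0).
  by rewrite -mulrnA -mulrnDr mulnC -divn_eq.
have hins : ins (d *+ (j %% n0)).
  have := insB hj (insMn (j %/ n0) hn0); by rewrite e1 addrAC subrr add0r.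
by have := hmin _ hr hins; rewrite leqNgt ltn_pmod.
Qed.

Definition D := d *+ n0.
Definition e := - D.
Definition w := v ^+ n0.

Lemma hw : w \in Sg D. Proof. exact: (SgX hgr). Qed.

Lemma nthR (a : seq S) j : all (fun x => x \in R) a -> a`_j \in R.
Proof.
move=> aR; case: (ltnP j (size a)) => hj.
  by move/(all_nthP 0): aR => /(_ j hj).
by rewrite nth_default //; exact: R0.
Qed.

Lemma gen s : s \in Sg 0 -> exists N (c : nat -> S),
  (forall i, c i \in R /\ c i \in Sg (e *+ i)) /\ s = \sum_(0 <= i < N) c i * w ^+ i.
Proof.
move=> hs; case: n0_spec => n0p [hn0 hmin].
case: hpoly => _ [hgen _]; case: (hgen s isT) => a [aR hsa].
pose b := fun j => comp hgr (a`_j) (0 - d *+ j).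
have e1 : s = \sum_(0 <= j < size a) b j * v ^+ j.
  have := comp_hom hgr 0 hs; rewrite eqxx => <-.
  rewrite hsa /poly_expr.
  rewrite (comp_sumn hgr (size a) (fun i => a`_i * v ^+ i)) big_mkord; apply: eq_bigr => i _.
  by rewrite (comp_mulr hgr _ _ (SgX hgr i hv)).
have bz : forall j, ~~ (n0 %| j)%N -> b j = 0.
  move=> j hj; case: (eqVneq (b j) 0) => // hb; exfalso.
  have h1 : ins (0 - d *+ j).
    by exists (b j); split; [apply: comp_R; apply: nthR | split => //; apply: comp_Sg].
  have := insN h1; rewrite sub0r opprK => /div_n0; by rewrite (negbTE hj).
exists (size a), (fun i => b (n0 * i)%N); split.
  move=> i; split; first by apply: comp_R; apply: nthR.
  apply: (SgE (i := 0 - d *+ (n0 * i))); last exact: comp_Sg.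
  by rewrite /e /D mulNrn -mulrnA sub0r.
rewrite e1 (compress (n0 := n0)) //.
- by apply: eq_bigr => i _; rewrite /w -exprM.
- by move=> j /bz ->; rewrite mul0r.
- by move=> j hj; rewrite /b nth_default // comp0 mul0r.
Qed.

Lemma ind N (c : nat -> S) : (forall i, c i \in R) ->
  \sum_(0 <= i < N) c i * w ^+ i = 0 -> forall i, (i < N)%N -> c i = 0.
Proof.
move=> cR h0 i hi; case: n0_spec => n0p _.
pose t := mkseq (fun j => if (n0 %| j)%N then c (j %/ n0)%N else 0) (n0 * N)%N.
have tR : all (fun a => a \in R) t.
  apply/(all_nthP 0) => j; rewrite size_mkseq => hj; rewrite nth_mkseq //.
  by case: ifP => _; [exact: cR | exact: R0].
have tz : poly_expr t v = 0.
  rewrite -[RHS]h0 /poly_expr size_mkseq -(@spread _ n0 N (fun i => c i * w ^+ i) n0p) big_mkord.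
  apply: eq_bigr => j _; rewrite nth_mkseq //.
  case: ifP => [/dvdnP [q ->] | _]; last by rewrite mul0r.
  by rewrite mulnK // /w -exprM mulnC.
case: hpoly => _ [_ hind]; have := hind t tR tz.
move/(all_nthP 0) => /(_ (n0 * i)%N); rewrite size_mkseq ltn_pmul2l // => /(_ hi).
by rewrite nth_mkseq ?ltn_pmul2l // dvdn_mulr // mulKn // => /eqP.
Qed.

Lemma caseA : D = 0 -> exists x,
  is_poly_ring_in_over (Sg 0) (fun a => (a \in R) && (a \in Sg 0)) x.
Proof.
move=> hD; exists w; split; first by have := hw; rewrite hD.
split.
  move=> c hc; case: (gen hc) => N [cf [hcf ->]]; exists (mkseq cf N); split.
    apply/(all_nthP 0) => i; rewrite size_mkseq => hi; rewrite nth_mkseq //.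
    case: (hcf i) => h1 h2; apply/andP; split => //; move: h2; by rewrite /e hD oppr0 mul0rn.
  rewrite /poly_expr size_mkseq big_mkord; apply: eq_bigr => i _.
  by rewrite nth_mkseq.
move=> s sR sz; apply/(all_nthP 0) => i hi; apply/eqP.
apply: (@ind (size s) (fun i => s`_i)) => //.
- move=> j; case: (ltnP j (size s)) => hj.
    by move/(all_nthP 0): sR => /(_ j hj) /andP [].
  by rewrite nth_default //; exact: R0.
- by rewrite big_mkord.
Qed.

Lemma Sg0X a n : a \in Sg 0 -> a ^+ n \in Sg 0.
Proof. by move=> ha; have := SgX hgr n ha; rewrite mul0rn. Qed.
Lemma Sg0M a b : a \in Sg 0 -> b \in Sg 0 -> a * b \in Sg 0.
Proof. by move=> ha hb; have := SgM hgr ha hb; rewrite addr0. Qed.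
Lemma Sg0sum N (F : nat -> S) : (forall i, F i \in Sg 0) -> \sum_(0 <= i < N) F i \in Sg 0.
Proof.
move=> hF; elim: N => [|N IH]; first by rewrite big_geq //; exact: Sg0.
by rewrite big_nat_recr //=; apply: SgD.
Qed.

Lemma S0c : subring_closed (Sg 0).
Proof.
split; first exact: Sg1.
- by move=> a b ha hb; apply: SgB.
- by move=> a b ha hb; apply: Sg0M.
Qed.

Lemma leq_sum_nat N (nn : nat -> nat) i : (i < N)%N -> (nn i <= \sum_(0 <= t < N) nn t)%N.
Proof.
elim: N => [//|N IH] hi; rewrite big_nat_recr //=.
case: (ltnP i N) => h; first by apply: (leq_trans (IH h)); exact: leq_addr.
have -> : i = N by apply/eqP; rewrite eqn_leq h -ltnS hi.
exact: leq_addl.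
Qed.

Lemma frac_eq (L : comPzRingType) (x y U Fv : L) n1 n2 : U * Fv = 1 ->
  x * U ^+ n1 - y * U ^+ n2 = (x * Fv ^+ n2 - y * Fv ^+ n1) * U ^+ (n1 + n2).
Proof.
move=> h.
have -> : (x * Fv ^+ n2 - y * Fv ^+ n1) * U ^+ (n1 + n2)
   = x * U ^+ n1 * (U * Fv) ^+ n2 - y * U ^+ n2 * (U * Fv) ^+ n1.
  by rewrite exprD !exprMn; ring.
by rewrite h !expr1n !mulr1.
Qed.

Lemma regroup (L : comPzRingType) (a U Fv X : L) m1 m2 i :
  a * U ^+ m2 * X ^+ i * (Fv ^+ m1 * Fv ^+ m2) = a * Fv ^+ m1 * X ^+ i * (U * Fv) ^+ m2.
Proof. by rewrite exprMn; ring. Qed.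

Lemma caseB k r : (0 < k)%N -> e *+ k = 0 -> r \in R -> r \in Sg e ->
  exists (L : comPzRingType) (phi : S -> L),
    is_localization (Sg 0) (r ^+ k) phi /\ is_poly_ring1 L.
Proof.
case: k => // k' _ hk hr hre.
set f := r ^+ k'.+1.
have hf : f \in Sg 0 by have := SgX hgr k'.+1 hre; rewrite hk.
have fR : f \in R by exact: RX.
pose T0 := subTy S0c.
pose F : T0 := insubd 0 f.
pose L := Loc F.
pose j : S -> L := fun s => pl F (insubd (0 : T0) s, 0%N).
pose u : L := pl F (1, 1%N).
have vi : forall a, a \in Sg 0 -> subv (insubd (0 : T0) a) = a.
  by move=> a ha; rewrite insubdK.
have jD : forall a b, a \in Sg 0 -> b \in Sg 0 -> j (a + b) = j a + j b.
  move=> a b ha hb; rewrite /j pl_add; congr (pl F (_, _)); apply: val_inj.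
  rewrite insubdK; last exact: (SgD hgr ha hb).
  by rewrite -[a in LHS](insubdK (0 : T0) ha) -[b in LHS](insubdK (0 : T0) hb).
have jM : forall a b, a \in Sg 0 -> b \in Sg 0 -> j (a * b) = j a * j b.
  move=> a b ha hb; rewrite /j pl_mul; congr (pl F (_, _)); apply: val_inj.
  rewrite insubdK; last exact: (Sg0M ha hb).
  by rewrite -[a in LHS](insubdK (0 : T0) ha) -[b in LHS](insubdK (0 : T0) hb).
have j1 : j 1 = 1.
  rewrite /j -pl_one; congr (pl F (_, _)); apply: val_inj.
  by rewrite insubdK //; exact: Sg1.
have j0 : j 0 = 0.
  rewrite /j; congr (pl F (_, _)); apply: val_inj.
  by rewrite insubdK //; exact: Sg0.
have jB : forall a b, a \in Sg 0 -> b \in Sg 0 -> j (a - b) = j a - j b.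
  move=> a b ha hb; have := jD _ _ (SgB hgr ha hb) hb; rewrite subrK => ->.
  by rewrite addrK.
have jf : u * j f = 1 by exact: pl_inv.
have jX : forall a n, a \in Sg 0 -> j (a ^+ n) = j a ^+ n.
  move=> a n ha; elim: n => [|n IH]; first by rewrite !expr0.
  by rewrite !exprS jM ?IH //; exact: Sg0X.
have jsum : forall N (s : nat -> S), (forall i, s i \in Sg 0) ->
    j (\sum_(0 <= i < N) s i) = \sum_(0 <= i < N) j (s i).
  move=> N s hs; elim: N => [|N IH]; first by rewrite !big_geq.
  by rewrite !big_nat_recr //= jD ?IH //; exact: Sg0sum.
have jsurj : forall y : L, exists a n, a \in Sg 0 /\ y = j a * u ^+ n.
  apply: plW => -[x n]; exists (subv x), n; split; first exact: subP.
  rewrite /j valKd -(pl_fracE F x n) -mulrA -exprMn [_ * u]mulrC.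
  by rewrite [pl F (1, 1%N) * _]pl_inv expr1n mulr1.
have jker : forall a, a \in Sg 0 -> j a = 0 -> exists p, f ^+ p * a = 0.
  move=> a ha /pl_ker [p hp]; exists p.
  by have := congr1 (fun z : T0 => subv z) hp; rewrite /= (subvX F p) !vi.
have fcan : forall m z, j f ^+ m * z = 0 -> z = 0.
  move=> m z hz; rewrite -[z]mul1r -(expr1n _ m) -jf exprMn -mulrA hz mulr0 //.
exists L, j; split.
  split; first exact: j1.
  split; first exact: jD.
  split; first exact: jM.
  split; first by exists u.
  split.
    move=> y; case: (jsurj y) => a [n [ha ->]]; exists a, n; split => //.
    by rewrite -mulrA -exprMn jf expr1n mulr1.
  by move=> a ha /(jker a ha).
have hrw : r * w \in Sg 0.
  by have := SgM hgr hre hw; rewrite /e addNr.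
have hwS : forall i, w ^+ i \in Sg (D *+ i).
  move=> i. exact: (SgX hgr i hw).
pose A := fun y : L => pb (exists a n, a \in R /\ a \in Sg 0 /\ y = j a * u ^+ n).
exists A, (j (r * w)); split.
  split; first by apply/pbP; exists 1, 0%N; rewrite j1 expr0 mulr1; split; [exact: R1 | split; [exact: Sg1|]].
  split.
    move=> y1 y2 /pbP [a1 [n1 [a1R [a1S ->]]]] /pbP [a2 [n2 [a2R [a2S ->]]]].
    apply/pbP; exists (a1 * f ^+ n2 - a2 * f ^+ n1), (n1 + n2)%N; split.
      by apply: RB; apply: RM => //; apply: RX.
    split; first by apply: (SgB hgr); apply: Sg0M => //; exact: Sg0X.
    rewrite jB; try (apply: Sg0M => //; exact: Sg0X).
    rewrite !jM ?(jX _ _ hf) //; try exact: Sg0X.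
    by apply: frac_eq; exact: jf.
  move=> y1 y2 /pbP [a1 [n1 [a1R [a1S ->]]]] /pbP [a2 [n2 [a2R [a2S ->]]]].
  apply/pbP; exists (a1 * a2), (n1 + n2)%N; split; first exact: RM.
  split; first exact: Sg0M.
  by rewrite jM // exprD; ring.
split => //.
split.
  move=> y _; case: (jsurj y) => s [n [hs ->]]; case: (gen hs) => N [c [hc ->]].
  have cS : forall i, c i * r ^+ (k' * i) \in Sg 0.
    move=> i; apply: (SgE (i := e *+ i + e *+ (k' * i))); last first.
      by apply: (SgM hgr); [exact: (proj2 (hc i)) | exact: SgX].
    by rewrite -mulrnDr -mulSn mulrnA hk mul0rn.
  have cwS : forall i, c i * w ^+ i \in Sg 0.
    move=> i; apply: (SgE (i := e *+ i + D *+ i)); last first.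
      by apply: (SgM hgr); [exact: (proj2 (hc i)) | exact: hwS].
    by rewrite -mulrnDl /e addNr mul0rn.
  exists (mkseq (fun i => j (c i * r ^+ (k' * i)) * u ^+ (i + n)) N); split.
    apply/(all_nthP 0) => i; rewrite size_mkseq => hi; rewrite nth_mkseq //.
    apply/pbP; exists (c i * r ^+ (k' * i)), (i + n)%N; split.
      by apply: RM; [exact: (proj1 (hc i)) | exact: RX].
    by split.
  rewrite jsum // mulr_suml /poly_expr size_mkseq big_mkord; apply: eq_bigr => i _.
  rewrite nth_mkseq //.
  have eq1 : c i * r ^+ (k' * i) * (r * w) ^+ i = c i * w ^+ i * f ^+ i.
    by rewrite /f -exprM mulSn exprD exprMn; ring.
  rewrite -(jX _ i hrw) mulrAC -jM ?cS //; last exact: Sg0X.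
  have hfi : f ^+ i \in Sg 0 by exact: Sg0X.
  rewrite eq1 (jM _ _ (cwS i) hfi) (jX _ _ hf).
  rewrite exprD.
  have -> : j (c i * w ^+ i) * j f ^+ i * (u ^+ i * u ^+ n)
      = j (c i * w ^+ i) * u ^+ n * (u * j f) ^+ i by rewrite exprMn; ring.
  by rewrite jf expr1n mulr1.
move=> s sA sz.
have hch : forall i, exists a n, a \in R /\ a \in Sg 0 /\ s`_i = j a * u ^+ n.
  move=> i; case: (ltnP i (size s)) => hi.
    by move/(all_nthP 0): sA => /(_ i hi) /pbP.
  exists 0, 0%N; rewrite nth_default // j0 mul0r; split; [exact: R0 | split => //; exact: Sg0].
pose aa i := proj1_sig (constructive_indefinite_description _ (hch i)).
have haa : forall i, exists n, aa i \in R /\ aa i \in Sg 0 /\ s`_i = j (aa i) * u ^+ n.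
  move=> i; exact: (proj2_sig (constructive_indefinite_description _ (hch i))).
pose nn i := proj1_sig (constructive_indefinite_description _ (haa i)).
have hnn : forall i, aa i \in R /\ aa i \in Sg 0 /\ s`_i = j (aa i) * u ^+ nn i.
  move=> i; exact: (proj2_sig (constructive_indefinite_description _ (haa i))).
set N := size s.
set M := (\sum_(0 <= i < N) nn i)%N.
have hM : forall i, (i < N)%N -> (nn i <= M)%N by move=> i hi; exact: leq_sum_nat.
clearbody M.
pose b i := aa i * f ^+ (M - nn i).
have bR : forall i, b i \in R.
  by move=> i; apply: RM; [exact: (proj1 (hnn i)) | exact: RX].
have bS : forall i, b i \in Sg 0.
  by move=> i; apply: Sg0M; [exact: (proj1 (proj2 (hnn i))) | exact: Sg0X].
have bwS : forall i, b i * (r * w) ^+ i \in Sg 0.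
  by move=> i; apply: Sg0M => //; exact: Sg0X.
have e0 : j (\sum_(0 <= i < N) b i * (r * w) ^+ i) = 0.
  rewrite jsum //; transitivity (poly_expr s (j (r * w)) * j f ^+ M); last by rewrite sz mul0r.
  rewrite /poly_expr big_mkord mulr_suml; apply: eq_bigr => i _.
  have hi : (i < N)%N := ltn_ord i.
  rewrite (proj2 (proj2 (hnn i))) jM // ?(jX _ _ hrw) //; last exact: Sg0X.
  rewrite /b jM ?(jX _ _ hf); [|exact: (proj1 (proj2 (hnn i))) | exact: Sg0X].
  rewrite -(subnK (hM i hi)) exprD subnK ?hM //.
  by rewrite regroup jf expr1n mulr1.
case: (jker _ (Sg0sum _ bwS) e0) => p hp.
have bE : forall i, b i = aa i * f ^+ (M - nn i) by [].
clearbody b.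
have hc : forall i, (i < N)%N -> f ^+ p * b i * r ^+ i = 0.
  apply: (@ind N (fun i => f ^+ p * b i * r ^+ i)).
    by move=> i; apply: RM; [apply: RM => //; exact: RX | exact: RX].
  rewrite -[RHS]hp mulr_sumr; apply: eq_bigr => i _; rewrite exprMn; ring.
apply/(all_nthP 0) => i hi; apply/eqP.
rewrite (proj2 (proj2 (hnn i))).
suff -> : j (aa i) = 0 by rewrite mul0r.
apply: (fcan (M - nn i)%N); rewrite mulrC -(jX _ _ hf) -jM;
  try exact: Sg0X; try exact: (proj1 (proj2 (hnn i))).
rewrite -bE.
apply: (fcan (p + i)%N); rewrite -(jX _ _ hf) -jM; try exact: Sg0X; try exact: bS.
have -> : f ^+ (p + i) * b i = (f ^+ p * b i * r ^+ i) * r ^+ (k' * i).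
  have fi : f ^+ i = r ^+ i * r ^+ (k' * i) by rewrite /f -exprM mulSn exprD.
  by rewrite exprD fi; ring.
by rewrite hc // mul0r j0.
Qed.

Lemma main_res :
  (exists x : S,
     is_poly_ring_in_over (Sg 0) (fun a => (a \in R) && (a \in Sg 0)) x)
  \/
  (exists (e : G) (k : nat),
     e != 0 /\ in_support Sg R e /\ is_order e k /\
     forall r : S, r \in R -> r \in Sg e -> r != 0 ->
       exists (L : comPzRingType) (phi : S -> L),
         is_localization (Sg 0) (r ^+ k) phi /\ is_poly_ring1 L).
Proof.
case: n0_spec => n0p [hn0 hmin].
case: (eqVneq D 0) => hD; first by left; exact: caseA.
right.
have hk : exists k, (0 < k)%N && (e *+ k == 0).
  by case: (htor e) => k [kp hk]; exists k; rewrite kp hk eqxx.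
case: (ex_minnP hk) => k /andP [kp /eqP hk0] hmk.
exists e, k; split; first by rewrite /e oppr_eq0.
split; first exact: insN hn0.
split.
  split => //; split => // m mp mk; apply/negP => /eqP h.
  by have := hmk m; rewrite mp h eqxx => /(_ isT); rewrite leqNgt mk.
by move=> r hr hre _; exact: caseB.
Qed.

End Main.

Theorem lemma4p2 (G : zmodType) (S : comPzRingType) (Sg : G -> pred S)
  (R : pred S) (v : S) (d : G) :
  torsion G ->
  is_grading Sg ->
  graded_subring Sg R ->
  v \in Sg d ->
  is_poly_ring_in_over predT R v ->
  support_is_subgroup Sg R ->
  (exists x : S,
     is_poly_ring_in_over (Sg 0) (fun a => (a \in R) && (a \in Sg 0)) x)
  \/
  (exists (e : G) (k : nat),
     e != 0 /\ in_support Sg R e /\ is_order e k /\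
     forall r : S, r \in R -> r \in Sg e -> r != 0 ->
       exists (L : comPzRingType) (phi : S -> L),
         is_localization (Sg 0) (r ^+ k) phi /\ is_poly_ring1 L).
Proof.
move=> h1 h2 h3 h4 h5 h6; exact: (main_res h1 h2 h3 h4 h5 h6).
Qed.
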